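(* Let $T$ be an SSYT of skew shape. (a) If $S$ is the result of a row insertion $T\leftarrow k$ (external, or internal from some row) for some positive integer $k$, then the reverse row insertion $S\rightarrow c$ results in $T$, where $c$ is the unique cell that is non-empty in $S$ but empty in $T$. (b) If $S$ is the result of $T\rightarrow c$ for some outside corner $c$ of $T$, and the final entry $k$ of $T\rightarrow c$ lands in row $r\ge0$, then $S\leftarrow_r k$ results in $T$.
   Context: Diagrams are in French notation (rows numbered from the bottom starting at 1; a partition $\lambda$ consists of the cells in column $i$, row $j$ with $1\le i\le\lambda_j$; $\lambda/\mu$ is the set difference). An SSYT of skew shape has positive integer entries weakly increasing left to right in rows and strictly increasing bottom to top in columns. An inside corner of $T$ is a cell with no cell of $T$ immediately below or left of it; an outside corner is a cell with no cell of $T$ immediately above or right of it. Row insertion: to insert $x$ starting at row $j$: if $x$ is weakly larger than all entries of row $j$ (or row $j$ is empty), put $x$ in a new cell at the right end of row $j$ (if the row is empty and the shape is $\alpha/\beta$, in column $\alpha_j+1$) and stop; otherwise replace the entry $y$ of the leftmost cell of row $j$ with entry $>x$ by $x$ and insert $y$ starting at row $j+1$. External insertion $T\leftarrow_0 k$ inserts $k$ starting at row 1. If $T$ has an inside corner in row $r\ge1$ with entry $k$, internal insertion $T\leftarrow_r k$ removes that cell and inserts $k$ starting at row $r+1$. Reverse row insertion $T\rightarrow c$, $c$ an outside corner in row $j$ with entry $k$: delete $c$ and reverse-insert $x=k$ into row $j-1$: if that row index is 0, stop ($x$ lands in row 0); else if $x$ is weakly smaller than all entries of that row $r$, place $x$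 in a new cell immediately left of the leftmost cell of row $r$ and stop ($x$ lands in row $r$); else replace the entry $y$ of the rightmost cell of row $r$ with entry $<x$ by $x$ and reverse-insert $y$ into row $r-1$. The value $x$ at termination is the final entry. *)

(* Defs.v *)
From mathcomp Require Import all_boot.
Set Implicit Arguments. Unset Strict Implicit. Unset Printing Implicit Defensive.

(* Rows are numbered from 1 (bottom).
   [tb_in] lists beta_1, beta_2, ... and [tb_rows] lists the entries of
   rows 1, 2, ... from left to right (missing items = 0 / empty row).
   Row j occupies the columns beta_j + 1 .. alpha_j, where
   alpha_j = beta_j + size (row j).  The shape alpha/beta is part of the data
   (needed e.g. for insertion into an empty row). *)
Record sktab := SkTab { tb_in : seq nat ; tb_rows : seq (seq nat) }.

Definition inner (T : sktab) (j : nat) : nat := nth 0 (tb_in T) j.-1.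
Definition row (T : sktab) (j : nat) : seq nat := nth [::] (tb_rows T) j.-1.
Definition outer (T : sktab) (j : nat) : nat := inner T j + size (row T j).

(* cells are pairs (column i, row j) *)
Definition is_cell (T : sktab) (c : nat * nat) : Prop :=
  1 <= c.2 /\ inner T c.2 < c.1 <= outer T c.2.

Definition entry (T : sktab) (c : nat * nat) : nat :=
  nth 0 (row T c.2) (c.1 - inner T c.2).-1.

Definition is_skew (T : sktab) : Prop :=
  forall j, 1 <= j -> inner T j.+1 <= inner T j /\ outer T j.+1 <= outer T j.

Definition is_ssyt (T : sktab) : Prop :=
  [/\ forall c, is_cell T c -> 0 < entry T c,
      forall i j, is_cell T (i, j) -> is_cell T (i.+1, j) ->
                  entry T (i, j) <= entry T (i.+1, j)
    & forall i j, is_cell T (i, j) -> is_cell T (i, j.+1) ->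
                  entry T (i, j) < entry T (i, j.+1)].

Definition inside_corner (T : sktab) (c : nat * nat) : Prop :=
  [/\ is_cell T c, ~ is_cell T (c.1, c.2.-1) & ~ is_cell T (c.1.-1, c.2)].

Definition outside_corner (T : sktab) (c : nat * nat) : Prop :=
  [/\ is_cell T c, ~ is_cell T (c.1, c.2.+1) & ~ is_cell T (c.1.+1, c.2)].

Definition teq (T S : sktab) : Prop :=
  forall j, 1 <= j -> inner T j = inner S j /\ row T j = row S j.

Definition set_row (T : sktab) (j : nat) (s : seq nat) : sktab :=
  SkTab (tb_in T) (set_nth [::] (tb_rows T) j.-1 s).
Definition set_inner (T : sktab) (j : nat) (b : nat) : sktab :=
  SkTab (set_nth 0 (tb_in T) j.-1 b) (tb_rows T).

(* Row insertion of x starting at row j (fuel bounds the number of rows;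
   the fuel used below is always sufficient). *)
Fixpoint ins_fuel (n : nat) (T : sktab) (j x : nat) : sktab :=
  match n with
  | 0 => T
  | n'.+1 =>
    let s := row T j in
    if all (fun y => y <= x) s then set_row T j (rcons s x)
    else
      let p := find (fun y => x < y) s in
      ins_fuel n' (set_row T j (set_nth 0 s p x)) j.+1 (nth 0 s p)
  end.

Definition ins_from (T : sktab) (j x : nat) : sktab :=
  ins_fuel (size (tb_rows T)).+2 T j x.

Definition ext_ins (T : sktab) (k : nat) : sktab := ins_from T 1 k.

(* internal insertion T <-_r k (r >= 1): remove the inside corner of row r,
   i.e. its leftmost cell, and insert k starting at row r+1. *)
Definition int_ins (T : sktab) (r k : nat) : sktab :=
  ins_from (set_inner (set_row T r (behead (row T r))) r (inner T r).+1) r.+1 k.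

(* Reverse insertion of x into row r, downwards.  Returns
   (tableau, final entry, row in which it lands). *)
Fixpoint rev_fuel (n : nat) (T : sktab) (r x : nat) : sktab * nat * nat :=
  match n with
  | 0 => (T, x, r)
  | n'.+1 =>
    if r == 0 then (T, x, 0) else
    let s := row T r in
    if all (fun y => x <= y) s then
      (set_inner (set_row T r (x :: s)) r (inner T r).-1, x, r)
    else
      let p := (size s).-1 - find (fun y => y < x) (rev s) in
      rev_fuel n' (set_row T r (set_nth 0 s p x)) r.-1 (nth 0 s p)
  end.

(* Reverse row insertion T -> c for an outside corner c = (i, j): delete c
   (the last cell of row j) and reverse-insert its entry into row j-1. *)
Definition revins (T : sktab) (c : nat * nat) : sktab * nat * nat :=
  let s := row T c.2 in
  rev_fuel c.2.+1 (set_row T c.2 (take (size s).-1 s)) c.2.-1 (entry T c).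

(* Main.v *)
Require Import Defs.
From mathcomp Require Import all_boot zify.
Set Implicit Arguments. Unset Strict Implicit. Unset Printing Implicit Defensive.

Lemma row_set_row T j s j' : 1 <= j -> 1 <= j' ->
  row (set_row T j s) j' = if j' == j then s else row T j'.
Proof.
move=> hj hj'; rewrite /row /set_row /= nth_set_nth /=.
by case: j hj j' hj' => // j _ [] // j' _ /=; rewrite eqSS.
Qed.

Lemma inner_set_inner T j b j' : 1 <= j -> 1 <= j' ->
  inner (set_inner T j b) j' = if j' == j then b else inner T j'.
Proof.
move=> hj hj'; rewrite /inner /set_inner /= nth_set_nth /=.
by case: j hj j' hj' => // j _ [] // j' _ /=; rewrite eqSS.
Qed.

Lemma find_eq (a : pred nat) s p :
  (forall i, i < p -> ~~ a (nth 0 s i)) -> p < size s -> a (nth 0 s p) -> find a s = p.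
Proof.
elim: s p => [|h t IH] [|p] //= Hb Hp Ha; first by rewrite Ha.
have := Hb 0 isT; rewrite /= => /negbTE ->; congr _.+1; apply: IH => // i Hi.
exact: (Hb i.+1).
Qed.

Lemma sorted_nth s i j : sorted leq s -> i <= j -> j < size s -> nth 0 s i <= nth 0 s j.
Proof.
move=> Hs Hij Hj; apply: (sorted_leq_nth leq_trans leqnn) => //; rewrite inE; lia.
Qed.

Lemma fwd_pos s x : sorted leq s -> ~~ all (fun y => y <= x) s ->
  let p := find (fun y => x < y) s in let y := nth 0 s p in
  let s' := set_nth 0 s p x in
  [/\ p < size s, x < y, ~~ all (fun z => y <= z) s',
      (size s').-1 - find (fun z => z < y) (rev s') = p
    & nth 0 s' p = x /\ set_nth 0 s' p y = s].
Proof.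
move=> Hs Hall p y s'.
have Hhas : has (fun y => x < y) s.
  by rewrite -has_predC in Hall; apply: sub_has Hall => z /=; rewrite -ltnNge.
have Hp : p < size s by rewrite -has_find.
have Hxy : x < y by apply: nth_find.
have Hsz : size s' = size s by rewrite size_set_nth; lia.
have Hn : nth 0 s' p = x by rewrite nth_set_nth /= eqxx.
split=> //.
- apply/allPn; exists x; last by rewrite -ltnNge.
  by rewrite -Hn; apply: mem_nth; rewrite Hsz.
- rewrite (@find_eq _ _ (size s - p.+1)).
  + rewrite Hsz; lia.
  + move=> i Hi; rewrite nth_rev Hsz; last lia.
    rewrite nth_set_nth /=; case: eqP => [?|_]; first lia.
    rewrite -leqNgt; apply: sorted_nth => //; lia.
  + rewrite size_rev Hsz; lia.
  + rewrite nth_rev Hsz; last lia.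
    have -> : size s - (size s - p.+1).+1 = p by lia.
    by rewrite Hn.
split=> //.
  by rewrite set_set_nth eqxx; apply: (@eq_from_nth _ 0);
    [rewrite size_set_nth; lia | move=> i _; rewrite nth_set_nth /=; case: eqP => // ->].
Qed.

Lemma bwd_pos s x : sorted leq s -> ~~ all (fun y => x <= y) s ->
  let p := (size s).-1 - find (fun y => y < x) (rev s) in let y := nth 0 s p in
  let s' := set_nth 0 s p x in
  [/\ p < size s, y < x, ~~ all (fun z => z <= y) s',
      find (fun z => y < z) s' = p
    & nth 0 s' p = x /\ set_nth 0 s' p y = s].
Proof.
move=> Hs Hall p y s'.
have Hhas : has (fun y => y < x) (rev s).
  by rewrite has_rev -has_predC in Hall *; apply: sub_has Hall => z /=; rewrite -ltnNge.
pose t := find (fun y => y < x) (rev s).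
have Ht : t < size s by rewrite -(size_rev s) -has_find.
have Hpt : p = size s - t.+1 by rewrite /p -/t; lia.
have Hp : p < size s by lia.
have Hyx : y < x.
  by rewrite /y Hpt -nth_rev //; apply: (nth_find 0 Hhas).
have Hsz : size s' = size s by rewrite size_set_nth; lia.
have Hn : nth 0 s' p = x by rewrite nth_set_nth /= eqxx.
split=> //.
- apply/allPn; exists x; last by rewrite -ltnNge.
  by rewrite -Hn; apply: mem_nth; rewrite Hsz.
- apply: find_eq; rewrite ?Hsz ?Hn //.
  move=> i Hi; rewrite nth_set_nth /=; case: eqP => [?|_]; first lia.
  rewrite -leqNgt; apply: sorted_nth => //; lia.
split=> //.
  by rewrite set_set_nth eqxx; apply: (@eq_from_nth _ 0);
    [rewrite size_set_nth; lia | move=> i _; rewrite nth_set_nth /=; case: eqP => // ->].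
Qed.

Lemma ins_fuel_S n T j x : ins_fuel n.+1 T j x =
    let s := row T j in
    if all (fun y => y <= x) s then set_row T j (rcons s x)
    else
      let p := find (fun y => x < y) s in
      ins_fuel n (set_row T j (set_nth 0 s p x)) j.+1 (nth 0 s p).
Proof. by []. Qed.

Lemma rev_fuel_S n T r x : rev_fuel n.+1 T r x =
    if r == 0 then (T, x, 0) else
    let s := row T r in
    if all (fun y => x <= y) s then
      (set_inner (set_row T r (x :: s)) r (inner T r).-1, x, r)
    else
      let p := (size s).-1 - find (fun y => y < x) (rev s) in
      rev_fuel n (set_row T r (set_nth 0 s p x)) r.-1 (nth 0 s p).
Proof. by []. Qed.

Lemma row_nonempty T j : row T j != [::] -> j.-1 < size (tb_rows T).
Proof.
rewrite /row; case: ltnP => // H; by rewrite nth_default.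
Qed.

Lemma fwd n : forall T j x S, 1 <= j -> j <= (size (tb_rows T)).+1 ->
  (size (tb_rows T)).+1 < j + n ->
  (forall j', j <= j' -> sorted leq (row T j')) ->
  S = ins_fuel n T j x ->
  exists m v, [/\ j <= m, tb_in S = tb_in T,
    row S m = rcons (row T m) v,
    forall j', 1 <= j' -> j' != m -> size (row S j') = size (row T j') &
    (forall j', 1 <= j' -> (j' < j) || (m < j') -> row S j' = row T j') /\
    forall U f, m - j < f -> (forall j', j <= j' < m -> row U j' = row S j') ->
     exists U', rev_fuel f U m.-1 v = rev_fuel (f - (m - j)) U' j.-1 x /\
       tb_in U' = tb_in U /\
       forall j', 1 <= j' -> row U' j' = if (j <= j') && (j' < m) then row T j' else row U j'].
Proof.
elim: n => [|n IH] T j x S hj hjs hn hsort ->; first lia.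
rewrite ins_fuel_S /=.
case Hall: (all (fun y => y <= x) (row T j)).
  exists j, x; split => //.
  - by rewrite row_set_row // eqxx.
  - by move=> j' hj' /negbTE hne; rewrite row_set_row // hne.
  split.
    move=> j' hj' H; rewrite row_set_row //; case: eqP => // ?; lia.
  move=> U f _ _; exists U; rewrite subnn subn0; split => //; split => //.
  move=> j' _; case: ifP => //; lia.
have [Hp Hxy Hnall Hrev [Hn Hset]] := fwd_pos (hsort j (leqnn j)) (negbT Hall).
set s := row T j in Hp Hxy Hnall Hrev Hn Hset Hall *.
set p := find _ s in Hp Hxy Hnall Hrev Hn Hset *.
set y := nth 0 s p in Hxy Hnall Hrev Hn Hset *.
set s' := set_nth 0 s p x in Hnall Hrev Hn Hset *.
have Hjs : j.-1 < size (tb_rows T).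
  apply: row_nonempty; rewrite -/s; apply/eqP => E; by rewrite E in Hall.
set T1 := set_row T j s'.
have HT1s : size (tb_rows T1) = size (tb_rows T) by rewrite /= size_set_nth; lia.
have Hs1 : forall j', j.+1 <= j' -> sorted leq (row T1 j').
  move=> j' hj'; rewrite /T1 row_set_row //; last lia.
  case: eqP => [?|_]; [lia|apply: hsort; lia].
have [m [v [Hm Hin Hrow Hsz [Hrows Hrevp]]]] :=
  IH T1 j.+1 y (ins_fuel n T1 j.+1 y) isT ltac:(lia) ltac:(lia)
    Hs1 erefl.
have Hrow1 : forall j', 1 <= j' -> j' != j -> row T1 j' = row T j'.
  by move=> j' hj' /negbTE hne; rewrite /T1 row_set_row // hne.
exists m, v; split => //; first lia.
- by rewrite Hrow Hrow1 //; apply/eqP; lia.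
- move=> j' hj' hne; rewrite Hsz //; rewrite /T1 row_set_row //; case: eqP => // ->.
  rewrite size_set_nth; move: Hp; rewrite /s' /p /s; lia.
split.
  move=> j' hj' H; rewrite Hrows //; [|lia]; apply: Hrow1 => //; apply/eqP; lia.
move=> U f Hf HU.
have [U1 [E1 [Hin1 HU1]]] := Hrevp U f ltac:(lia) ltac:(move=> j' hj'; apply: HU; lia).
rewrite E1.
have -> : f - (m - j.+1) = (f - (m - j)).+1 by lia.
rewrite rev_fuel_S /=.
have -> : (j == 0) = false by lia.
have HU1j : row U1 j = s'.
  rewrite HU1 //; have -> : (j.+1 <= j) && (j < m) = false by lia.
  rewrite HU; last lia.
  rewrite Hrows //; last lia.
  by rewrite /T1 row_set_row // eqxx.
rewrite HU1j (negbTE Hnall) Hrev Hn Hset.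
exists (set_row U1 j s); split => //; split => //.
move=> j' hj'; rewrite row_set_row //; case: eqP => [->|hne].
  by have -> : (j <= j) && (j < m) by lia.
rewrite HU1 //; case: ifP => H1.
  have -> : (j <= j') && (j' < m) by lia.
  by apply: Hrow1 => //; apply/eqP.
by have -> : (j <= j') && (j' < m) = false by lia.
Qed.

Lemma row_set_inner T j b j' : row (set_inner T j b) j' = row T j'.
Proof. by []. Qed.
Lemma inner_set_row T j s j' : inner (set_row T j s) j' = inner T j'.
Proof. by []. Qed.

Lemma bwd (T : sktab) (HT : is_skew T) (Hs : is_ssyt T)
  (Hsort : forall j, 1 <= j -> sorted leq (row T j)) n :
 forall U r x q S k r0, r < n ->
  (forall j, 1 <= j <= r -> inner U j = inner T j /\ row U j = row T j) ->
  is_cell T (q, r.+1) -> x = entry T (q, r.+1) ->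
  rev_fuel n U r x = (S, k, r0) ->
  [/\ r0 <= r, size (tb_rows U) <= size (tb_rows S),
    forall j, 1 <= j -> (j < r0) || (r < j) -> row S j = row U j,
    forall j, 1 <= j -> j != r0 -> inner S j = inner U j &
    (0 < r0 -> [/\ row S r0 = k :: row U r0, inner S r0 = (inner U r0).-1,
                   0 < inner U r0 & all (fun z => k <= z) (row U r0)]) /\
    forall V g, r - r0 < g -> (forall j, r0 < j <= r -> row V j = row S j) ->
     exists V', ins_fuel g V r0.+1 k = ins_fuel (g - (r - r0)) V' r.+1 x /\
       tb_in V' = tb_in V /\
       forall j, 1 <= j -> row V' j = if (r0 < j) && (j <= r) then row U j else row V j].
Proof.
case: Hs => Hpos Hrw Hcol.
elim: n => [|n IH] U r x q S k r0 hn hU hq hx E; first lia.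
rewrite rev_fuel_S in E.
case: eqP E => [-> [<- <- <-] | /eqP hr E].
  split => //.
  split => // V g _ _; exists V; rewrite !subn0; split => //; split => //.
  by move=> j _; case: ifP => //; lia.
have hr1 : 1 <= r by lia.
have [hUi hUr] := hU r ltac:(lia).
move: E; rewrite /=.
case Hall: (all (fun y => x <= y) (row U r)).
  move=> [<- <- <-]; split => //.
  - by rewrite /= size_set_nth; lia.
  - by move=> j hj H; rewrite row_set_inner row_set_row //; case: eqP => // ?; lia.
  - by move=> j hj /negbTE hne; rewrite inner_set_inner // hne.
  split.
    move=> _; split.
    - by rewrite row_set_inner row_set_row // eqxx.
    - by rewrite inner_set_inner // eqxx.
    - rewrite hUi; case: (ltnP (inner T r) q) => Hq; last first.
        by move: hq; rewrite /is_cell /=; lia.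
      exfalso.
      have Hc : is_cell T (q, r).
        move: hq; rewrite /is_cell /=; have := HT r hr1; lia.
      have Hlt := Hcol q r Hc hq.
      have Hin : entry T (q, r) \in row U r.
        rewrite hUr /entry /=; apply: mem_nth; move: Hc; rewrite /is_cell /outer /=; lia.
      have := allP Hall _ Hin; rewrite -hx in Hlt; lia.
    - by [].
  move=> V g _ _; exists V; rewrite subnn subn0; split => //; split => //.
  by move=> j _; case: ifP => //; lia.
have Hsr : sorted leq (row U r) by rewrite hUr; apply: Hsort.
have [Hp Hyx Hnall Hfind [Hn Hset]] := bwd_pos Hsr (negbT Hall).
set s := row U r in Hp Hyx Hnall Hfind Hn Hset Hall hUr Hsr *.
set p := (size s).-1 - _ in Hp Hyx Hnall Hfind Hn Hset *.
set y := nth 0 s p in Hyx Hnall Hfind Hn Hset *.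
set s' := set_nth 0 s p x in Hnall Hfind Hn Hset *.
set U1 := set_row U r s'.
move=> E.
have HU1 : forall j, 1 <= j -> j != r -> row U1 j = row U j.
  by move=> j hj /negbTE hne; rewrite /U1 row_set_row // hne.
have hq' : is_cell T (inner T r + p.+1, r.-1.+1).
  rewrite prednK //; rewrite /is_cell /outer /= -hUr; lia.
have hy : y = entry T (inner T r + p.+1, r.-1.+1).
  rewrite prednK // /entry /= -hUr; congr nth; lia.
have [Hr0 Hsz Hrows Hinn [Hland Hins]] := IH U1 r.-1 y _ S k r0 ltac:(lia)
  ltac:(move=> j hj; rewrite /U1 /= HU1; [apply: hU|lia|apply/eqP]; lia) hq' hy E.
split.
- lia.
- apply: leq_trans Hsz; rewrite /= size_set_nth; lia.
- move=> j hj H; rewrite Hrows //; [apply: HU1 => //; apply/eqP|]; lia.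
- by move=> j hj hne; rewrite Hinn.
split.
  move=> h0; have [H1 H2 H3 H4] := Hland h0.
  have E' := HU1 r0 ltac:(lia) ltac:(apply/eqP; lia).
  by rewrite H1 H2 -E'; split.
move=> V g Hg HV.
have [V1 [E1 [Hin1 HV1]]] := Hins V g ltac:(lia) ltac:(move=> j hj; apply: HV; lia).
rewrite E1 prednK //.
have -> : g - (r.-1 - r0) = (g - (r - r0)).+1 by lia.
rewrite ins_fuel_S /=.
have HV1r : row V1 r = s'.
  rewrite HV1 //; have -> : (r0 < r) && (r <= r.-1) = false by lia.
  rewrite HV; last lia.
  rewrite Hrows //; last lia.
  by rewrite /U1 row_set_row // eqxx.
rewrite HV1r (negbTE Hnall) Hfind Hn Hset.
exists (set_row V1 r s); split => //; split => //.
move=> j hj; rewrite row_set_row //; case: eqP => [->|hne].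
  by have -> : (r0 < r) && (r <= r) by lia.
rewrite HV1 //; case: ifP => H1.
  have -> : (r0 < j) && (j <= r) by lia.
  by apply: HU1 => //; apply/eqP.
by have -> : (r0 < j) && (j <= r) = false by lia.
Qed.

Lemma fwd_full T0 j x S : 1 <= j -> j <= (size (tb_rows T0)).+1 ->
  (forall j', j <= j' -> sorted leq (row T0 j')) ->
  (forall j', 1 <= j' -> outer T0 j'.+1 <= outer T0 j') ->
  S = ins_from T0 j x ->
  exists m, [/\ j <= m, is_cell S (outer S m, m), outer S m = (outer T0 m).+1,
   (forall d, is_cell S d -> is_cell T0 d \/ d = (outer S m, m)) &
   outside_corner S (outer S m, m) /\
   exists U', [/\ tb_in U' = tb_in T0, forall j', 1 <= j' -> row U' j' = row T0 j' &
     revins S (outer S m, m) = rev_fuel j.+1 U' j.-1 x]].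
Proof.
move=> hj hjs hsort hout ES.
have [m [v [Hm Hin Hrow Hsz [Hrows Hrevp]]]] :=
  fwd (n := (size (tb_rows T0)).+2) hj hjs ltac:(lia) hsort ES.
have Hinn : forall j', inner S j' = inner T0 j' by move=> j'; rewrite /inner Hin.
have Hout : forall j', 1 <= j' -> j' != m -> outer S j' = outer T0 j'.
  by move=> j' h1 h2; rewrite /outer Hinn Hsz.
have Houtm : outer S m = (outer T0 m).+1.
  by rewrite /outer Hinn Hrow size_rcons addnS.
have hm1 : 1 <= m by lia.
exists m; split => //.
- rewrite /is_cell /= Houtm Hinn; rewrite /outer; lia.
- case=> a b; rewrite /is_cell /= => -[hb hab]; rewrite Hinn in hab.
  case: (eqVneq b m) => [Eb|hbm].
    subst b; case: (ltnP (outer T0 m) a) => ha.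
      by right; congr pair; rewrite Houtm; lia.
    by left; rewrite /is_cell /=; lia.
  by left; move: hab; rewrite Hout //; rewrite /is_cell /=; lia.
split.
  split.
  - rewrite /is_cell /= Houtm Hinn; rewrite /outer; lia.
  - rewrite /is_cell /= Houtm Hout //; last by apply/eqP; lia.
    have := hout m hm1; lia.
  - rewrite /is_cell /=; lia.
have [U' [EU [HinU HrowU]]] := Hrevp (set_row S m (row T0 m)) m.+1 ltac:(lia)
  ltac:(move=> j' hj'; rewrite row_set_row; [|lia|lia]; case: eqP => // ?; lia).
exists U'; split.
- by rewrite HinU /= Hin.
- move=> j' hj'; rewrite HrowU //; case: ifP => // H.
  rewrite row_set_row //; case: eqP => [->//|hne].
  rewrite Hrows //; apply/orP; move/negbT: H; rewrite negb_and -!ltnNge; move/eqP: hne; lia.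
change (rev_fuel m.+1 (set_row S m (take (size (row S m)).-1 (row S m))) m.-1
  (entry S (outer S m, m)) = rev_fuel j.+1 U' j.-1 x).
rewrite Hrow size_rcons succnK -cats1 take_size_cat //.
have -> : entry S (outer S m, m) = v.
  rewrite /entry /= /outer Hrow size_rcons addKn /= -cats1 nth_cat ltnn subnn //.
have -> : j.+1 = m.+1 - (m - j) by lia.
by rewrite -EU.
Qed.

Lemma ssyt_sorted T : is_ssyt T -> forall j, 1 <= j -> sorted leq (row T j).
Proof.
case=> _ Hrw _ j hj; apply/(sortedP 0) => i hi.
have := Hrw (inner T j + i.+1) j.
rewrite /is_cell /entry /outer /= -addnS !addKn /=.
apply; lia.
Qed.

Lemma teq_of T U : tb_in U = tb_in T -> (forall j, 1 <= j -> row U j = row T j) -> teq U T.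
Proof. by move=> Hi Hr j hj; rewrite /inner Hi Hr. Qed.

Lemma part_a T (HT : is_skew T) (Hs : is_ssyt T) :
  (forall S : sktab,
     (exists k, 0 < k /\ S = ext_ins T k) \/
     (exists r k, 1 <= r /\ (exists i, inside_corner T (i, r) /\ entry T (i, r) = k)
                  /\ S = int_ins T r k) ->
     exists c, [/\ is_cell S c, ~ is_cell T c,
                   (forall d, is_cell S d -> ~ is_cell T d -> d = c),
                   outside_corner S c
                 & teq (revins S c).1.1 T]).
Proof.
have Hsort := ssyt_sorted Hs.
have Hout : forall j, 1 <= j -> outer T j.+1 <= outer T j by move=> j hj; case: (HT j hj).
move=> S [[k [hk ES]] | [r [k [hr [[i [[Hic1 Hic2 Hic3] Hik]] ES]]]]].
  have [m [Hm Hc Hom Hd [Hoc [U' [Hin Hrow Erev]]]]] :=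
    @fwd_full T 1 k S isT ltac:(lia) ltac:(move=> j' hj'; exact: Hsort) Hout ES.
  exists (outer S m, m); split => //.
  - by rewrite /is_cell Hom /=; lia.
  - by move=> d hd hnd; case: (Hd d hd).
  - by rewrite Erev; apply: teq_of.
move: Hic1 Hic3 Hik; rewrite /is_cell /entry /= => Hic1 Hic3 Hik.
have Hi : i = (inner T r).+1 by lia.
move Es: (row T r) Hic1 Hik => s.
case: s Es => [|h t] Es Hic1 Hik.
  by move: Hic1; rewrite /outer Es /=; lia.
have Ehk : h = k by rewrite -Hik Hi subSn // subnn.
subst h.
set T0 := set_inner (set_row T r (behead (row T r))) r (inner T r).+1.
have HT0r : forall j, 1 <= j -> row T0 j = if j == r then t else row T j.
  by move=> j hj; rewrite /T0 row_set_inner row_set_row // Es.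
have HT0i : forall j, 1 <= j -> inner T0 j = if j == r then (inner T r).+1 else inner T j.
  by move=> j hj; rewrite /T0 inner_set_inner.
have HT0o : forall j, 1 <= j -> outer T0 j = outer T j.
  move=> j hj; rewrite /outer HT0r // HT0i //; case: eqP => [->|//].
  by rewrite Es /=; lia.
have Hrs : r.-1 < size (tb_rows T) by apply: row_nonempty; rewrite Es.
have [m [Hm Hc Hom Hd [Hoc [U' [Hin Hrow Erev]]]]] :=
  @fwd_full T0 r.+1 k S isT ltac:(rewrite /= size_set_nth; lia)
    ltac:(move=> j' hj'; rewrite HT0r; [|lia]; case: eqP => [?|_]; [lia|apply: Hsort; lia])
    ltac:(move=> j' hj'; rewrite !HT0o //; exact: Hout) ES.
exists (outer S m, m); split => //.
- by rewrite /is_cell Hom /= HT0o; lia.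
- move=> d hd hnd; case: (Hd d hd) => // Hd0; exfalso; apply: hnd.
  move: Hd0; case: d hd => a b hd; rewrite /is_cell /= => -[hb].
  rewrite HT0o // HT0i //; case: eqP => [->|_]; lia.
rewrite Erev rev_fuel_S.
have -> : (r == 0) = false by lia.
rewrite /= Hrow // HT0r // eqxx.
have Hsk : sorted leq (k :: t) by rewrite -Es; apply: Hsort.
rewrite (order_path_min leq_trans Hsk) /=.
move=> j hj; rewrite inner_set_inner // row_set_inner row_set_row //.
have Hinn : forall j, inner U' j = inner T0 j by move=> j'; rewrite /inner Hin.
case: eqP => [->|hne]; first by rewrite Hinn HT0i // eqxx Es.
have /negbTE hne' : j != r by apply/eqP.
by rewrite inner_set_row Hinn HT0i // Hrow // HT0r // hne'.
Qed.

Lemma part_b T (HT : is_skew T) (Hs : is_ssyt T) :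
  (forall c, outside_corner T c ->
     let S := (revins T c).1.1 in
     let k := (revins T c).1.2 in
     let r := (revins T c).2 in
     if r == 0 then teq (ext_ins S k) T
     else (exists i, inside_corner S (i, r) /\ entry S (i, r) = k)
          /\ teq (int_ins S r k) T).
Proof.
have Hsort := ssyt_sorted Hs.
case=> a b [Hc Hc1 Hc2].
move: (Hc) Hc2; rewrite /is_cell /= => -[hb Hab] Hc2.
have Ha : a = outer T b by lia.
move Es: (row T b) => s.
case/lastP: s Es => [|s0 z] Es.
  by move: Hab; rewrite /outer Es /=; lia.
have Hbs : b.-1 < size (tb_rows T) by apply: row_nonempty; rewrite Es; case: (s0).
have Hz : entry T (a, b) = z.
  by rewrite /entry /= Ha /outer addKn Es size_rcons /= nth_rcons ltnn eqxx.
set U := set_row T b s0.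
have Erev : revins T (a, b) = rev_fuel b.+1 U b.-1 z.
  change (rev_fuel b.+1 (set_row T b (take (size (row T b)).-1 (row T b))) b.-1
    (entry T (a, b)) = rev_fuel b.+1 U b.-1 z).
  by rewrite Es size_rcons succnK -cats1 take_size_cat // Hz.
case E: (revins T (a, b)) => [[S k] r0] /=.
rewrite Erev in E.
have HU : forall j, 1 <= j <= b.-1 -> inner U j = inner T j /\ row U j = row T j.
  move=> j hj; split => //; rewrite /U row_set_row; [|lia|lia].
  by case: eqP => // ?; lia.
have hq : is_cell T (a, b.-1.+1) by rewrite prednK.
have hz : z = entry T (a, b.-1.+1) by rewrite prednK.
have [Hr0 Hsz Hrows Hinn [Hland Hins]] :=
  @bwd T HT Hs Hsort b.+1 U b.-1 z a S k r0 ltac:(lia) HU hq hz E.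
have HsU : b <= size (tb_rows U) by rewrite /= size_set_nth; lia.
have HUb : row U b = s0 by rewrite /U row_set_row // eqxx.
have HUj : forall j, 1 <= j -> j != b -> row U j = row T j.
  by move=> j hj /negbTE hne; rewrite /U row_set_row // hne.
have Hall : all (fun y => y <= z) s0.
  apply/allP => y /(nthP 0) [i hi <-].
  have Hsb : sorted leq (rcons s0 z) by rewrite -Es; apply: Hsort.
  have := @sorted_nth (rcons s0 z) i (size s0) Hsb (ltnW hi) ltac:(by rewrite size_rcons).
  by rewrite !nth_rcons hi ltnn eqxx.
have Final : forall V' g, 0 < g -> row V' b = s0 ->
   (forall j, 1 <= j -> j != b -> inner V' j = inner T j /\ row V' j = row T j) ->
   (inner V' b = inner T b) ->
   teq (ins_fuel g V' b z) T.
  move=> V' [|g] // _ HrowV HV HSb.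
  rewrite ins_fuel_S /= HrowV Hall.
  move=> j hj; rewrite inner_set_row row_set_row //.
  case: eqP => [->|hne]; first by rewrite HSb Es.
  by apply: HV => //; apply/eqP.
case: eqP => [Er0|hr0].
  subst r0.
  rewrite /ext_ins /ins_from.
  have [V' [E1 [Hin1 Hrow1]]] := Hins S (size (tb_rows S)).+2 ltac:(lia) (fun _ _ => erefl).
  rewrite E1 prednK //.
  have HinS : forall j, inner V' j = inner S j by move=> j; rewrite /inner Hin1.
  apply: Final.
  - lia.
  - rewrite Hrow1 //; have -> : (0 < b) && (b <= b.-1) = false by lia.
    by rewrite Hrows // ?HUb //; lia.
  - move=> j hj hne; split; first by rewrite HinS Hinn //; lia.
    rewrite Hrow1 //; case: ifP => H; first by rewrite HUj.
    rewrite Hrows ?HUj //; lia.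
  - rewrite HinS Hinn //; lia.
have h0 : 0 < r0 by lia.
have [HS1 HS2 HS3 HS4] := Hland h0.
have HUr0 : row U r0 = row T r0 by rewrite HUj //; apply/eqP; lia.
split.
  exists (inner U r0); split.
    split.
    - rewrite /is_cell /= HS2; split => //; rewrite /outer HS2 HS1 /=; lia.
    - rewrite /is_cell /= => -[h1 h2].
      have := Hinn r0.-1 h1 ltac:(apply/eqP; lia).
      have [Hi _] := HT r0.-1 h1; rewrite prednK // in Hi.
      rewrite /U inner_set_row => Hin'.
      move: h2; rewrite Hin' /U inner_set_row; lia.
    - rewrite /is_cell /= HS2; move: HS3; rewrite /U inner_set_row; lia.
  rewrite /entry /= HS1 HS2.
  by have -> : (inner U r0 - (inner U r0).-1).-1 = 0 by lia.
rewrite /int_ins /ins_from.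
set V := set_inner (set_row S r0 (behead (row S r0))) r0 (inner S r0).+1.
have HVs : size (tb_rows S) <= size (tb_rows V) by rewrite /= size_set_nth; lia.
have HVr : forall j, 1 <= j -> row V j = if j == r0 then behead (row S r0) else row S j.
  by move=> j hj; rewrite /V row_set_inner row_set_row.
have HVi : forall j, 1 <= j -> inner V j = if j == r0 then (inner S r0).+1 else inner S j.
  by move=> j hj; rewrite /V inner_set_inner.
have [V' [E1 [Hin1 Hrow1]]] := Hins V (size (tb_rows V)).+2 ltac:(lia)
  ltac:(move=> j hj; rewrite HVr; [|lia]; case: eqP => // ?; lia).
have HinV : forall j, inner V' j = inner V j by move=> j; rewrite /inner Hin1.
rewrite E1 prednK //.
apply: Final.
- lia.
- rewrite Hrow1 //; have -> : (r0 < b) && (b <= b.-1) = false by lia.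
  rewrite HVr //; have -> : (b == r0) = false by lia.
  by rewrite Hrows ?HUb //; lia.
- move=> j hj hne; split.
    rewrite HinV HVi //; case: eqP => [->|hne'].
      rewrite HS2 prednK //.
    rewrite Hinn //; apply/eqP; exact: hne'.
  rewrite Hrow1 //; case: ifP => H; first by rewrite HUj.
  rewrite HVr //; case: eqP => [->|hne'].
    by rewrite HS1 /= HUr0.
  have Hc' : (j < r0) || (b.-1 < j).
    by apply/orP; move/negbT: H; rewrite negb_and -!ltnNge; move/eqP: hne'; lia.
  by rewrite Hrows ?HUj.
- rewrite HinV HVi //; have -> : (b == r0) = false by lia.
  rewrite Hinn //; lia.
Qed.

Theorem lemma4p7 (T : sktab) (HT : is_skew T) (Hs : is_ssyt T) :
  (* (a) *)
  (forall S : sktab,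
     (exists k, 0 < k /\ S = ext_ins T k) \/
     (exists r k, 1 <= r /\ (exists i, inside_corner T (i, r) /\ entry T (i, r) = k)
                  /\ S = int_ins T r k) ->
     exists c, [/\ is_cell S c, ~ is_cell T c,
                   (forall d, is_cell S d -> ~ is_cell T d -> d = c),
                   outside_corner S c
                 & teq (revins S c).1.1 T])
  /\
  (* (b) *)
  (forall c, outside_corner T c ->
     let S := (revins T c).1.1 in
     let k := (revins T c).1.2 in
     let r := (revins T c).2 in
     if r == 0 then teq (ext_ins S k) T
     else (exists i, inside_corner S (i, r) /\ entry S (i, r) = k)
          /\ teq (int_ins S r k) T).
Proof. split; [exact: part_a | exact: part_b]. Qed.
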